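(* Let $\pi\in\mathfrak{S}_n$ avoid $132$ and have all cycles of length $1$ or $3$. Let the $3$-cycles of $\pi$ have element sets $\{a_i<b_i<c_i\}$, $i=1,\dots,m$. Then every fixed point $g$ of $\pi$ satisfies $g>a_i$ for all $i$, and moreover $g$ lies at a hit of the Dyck word formed by the second and third entries, i.e. $|\{i: b_i<g\}|=|\{i: c_i<g\}|$.
   Context: A permutation avoids $132$ if there are no indices $i<j<k$ with $\pi_i<\pi_k<\pi_j$. (The Dyck word of the second and third entries is obtained by listing $\{b_i\}\cup\{c_i\}$ in increasing order, writing $0$ for each $b_i$ and $1$ for each $c_i$; a hit is a place where the preceding letters contain equally many $0$'s and $1$'s.) *)

(* Defs.v *)
From mathcomp Require Import all_boot all_fingroup.
Set Implicit Arguments. Unset Strict Implicit. Unset Printing Implicit Defensive.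

(* Permutations of 'I_n (values 0..n-1; the shift from 1..n is order-preserving). *)

Definition avoids132 (n : nat) (s : 'S_n) : Prop :=
  forall i j k : 'I_n, (i < j)%N -> (j < k)%N ->
    ~ ((s i < s k)%N /\ (s k < s j)%N).

Definition cyc_sorted (n : nat) (O : {set 'I_n}) : seq nat :=
  sort leq [seq val x | x <- enum O].

Definition cyc_a (n : nat) (O : {set 'I_n}) : nat := nth 0 (cyc_sorted O) 0.
Definition cyc_b (n : nat) (O : {set 'I_n}) : nat := nth 0 (cyc_sorted O) 1.
Definition cyc_c (n : nat) (O : {set 'I_n}) : nat := nth 0 (cyc_sorted O) 2.

Definition three_cycles (n : nat) (s : 'S_n) : {set {set 'I_n}} :=
  [set O in porbits s | #|O| == 3].

(* Main.v *)
Require Import Defs.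
From mathcomp Require Import all_boot all_fingroup zify.
Set Implicit Arguments. Unset Strict Implicit.

Lemma fix_pow n (s : 'S_n) y i : s y = y -> (s ^+ i)%g y = y.
Proof. move=> H; elim: i => [|i IH]; first by rewrite expg0 perm1.
by rewrite expgSr permM IH H. Qed.

Lemma three_facts n (s : 'S_n) O : O \in three_cycles s ->
  #|O| = 3 /\ (forall y, y \in O -> s y \in O /\ s y != y).
Proof.
rewrite inE => /andP[/imsetP[x _ ->] /eqP H3]; split => // y Hy.
have Ey : porbit s y = porbit s x by apply/eqP; rewrite eq_porbit_mem.
split; first by rewrite -Ey (mem_porbit s 1).
apply/eqP => Hf.
have : porbit s y \subset [set y].
  by apply/subsetP => z /porbitP[i ->]; rewrite fix_pow // inE.
move/subset_leq_card; rewrite cards1 Ey H3 //.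
Qed.

Lemma arith (a b c g x y z : nat) : a<b -> b<c -> g<>a -> g<>b -> g<>c ->
 (x=b\/x=c) -> (y=a\/y=c) -> (z=a\/z=b) -> x<>y -> x<>z -> y<>z ->
 (b<g -> g<c -> ~(y<z/\z<g)) -> (a<b -> b<g -> ~(x<g/\g<y)) ->
 (g<a -> a<c -> ~(g<z/\z<x)) -> (g<b -> b<c -> ~(g<z /\ z<y)) ->
 a<g /\ (b<g = (c<g)).
Proof.
move=> ab bc ga gb gc [->|->] [->|->] [->|->] //= _ _ _ I1 I2 I3 I4; split; try apply/idP/idP; lia.
Qed.

Lemma key n (s : 'S_n) O g : avoids132 s -> O \in three_cycles s -> s g = g ->
  (cyc_a O < g) /\ ((cyc_b O < g) = (cyc_c O < g)).
Proof.
move=> Hav HO Hg.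
have [H3 Hcl] := three_facts HO.
have memE x : (x \in O) = (val x \in cyc_sorted O).
  by rewrite /cyc_sorted mem_sort (mem_map val_inj) mem_enum.
have Hsz : size (cyc_sorted O) = 3 by rewrite size_sort size_map -cardE.
have Hu : uniq (cyc_sorted O).
  by rewrite sort_uniq (map_inj_uniq val_inj) enum_uniq.
have Hso : sorted leq (cyc_sorted O) by apply: sort_sorted; exact: leq_total.
have getx v : v \in cyc_sorted O -> exists2 X : 'I_n, X \in O & val X = v.
  rewrite /cyc_sorted mem_sort => /mapP[X]; rewrite mem_enum => ? ->.
  by exists X.
rewrite /cyc_a /cyc_b /cyc_c.
move: memE Hsz Hu Hso getx.
case: (cyc_sorted O) => [|a [|b [|c [|d l]]]] //= memE _ Hu Hso getx.
have [A HA EA] := getx a (mem_head _ _).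
have [B HB EB] : exists2 X : 'I_n, X \in O & val X = b by apply: getx; rewrite !inE eqxx orbT.
have [C HC EC] : exists2 X : 'I_n, X \in O & val X = c by apply: getx; rewrite !inE eqxx !orbT.
subst a b c.
move: Hu Hso; rewrite !inE !negb_or !andbT => Hu Hso.
have inO y : y \in O -> [\/ val y = val A, val y = val B | val y = val C].
  by rewrite memE !inE => /or3P[] /eqP ?; [apply: Or31|apply: Or32|apply: Or33].
have [sAO nA] := Hcl A HA.
have [sBO nB] := Hcl B HB.
have [sCO nC] := Hcl C HC.
have ngO : g \notin O by apply/negP => /Hcl [_]; rewrite Hg eqxx.
have ng : [/\ val g != val A, val g != val B & val g != val C].
  by split; apply/negP => /eqP/val_inj E; move: ngO; rewrite E ?HA ?HB ?HC.
move: Hu => /andP[/andP[uAB uAC] uBC].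
have inj1 : val (s A) != val (s B) by rewrite (inj_eq val_inj) (inj_eq perm_inj) -(inj_eq val_inj).
have inj2 : val (s A) != val (s C) by rewrite (inj_eq val_inj) (inj_eq perm_inj) -(inj_eq val_inj).
have inj3 : val (s B) != val (s C) by rewrite (inj_eq val_inj) (inj_eq perm_inj) -(inj_eq val_inj).
move: nA nB nC; rewrite -!(inj_eq val_inj) => nA nB nC.
have hx : val (s A) = val B \/ val (s A) = val C.
  by case: (inO _ sAO) => e; [by rewrite e eqxx in nA | left | right].
have hy : val (s B) = val A \/ val (s B) = val C.
  by case: (inO _ sBO) => e; [left | by rewrite e eqxx in nB | right].
have hz : val (s C) = val A \/ val (s C) = val B.
  by case: (inO _ sCO) => e; [left | right | by rewrite e eqxx in nC].
have lAB : val A < val B by move: Hso uAB => /= /andP[? ?] ?; rewrite ltn_neqAle; apply/andP.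
have lBC : val B < val C by move: Hso uBC => /= /andP[? ?] ?; rewrite ltn_neqAle; apply/andP.
have I1 := Hav B g C; have I2 := Hav A B g; have I3 := Hav g A C; have I4 := Hav g B C.
rewrite Hg in I1 I2 I3 I4.
case: ng => ng1 ng2 ng3.
apply: (arith lAB lBC _ _ _ hx hy hz) => //; apply/eqP; assumption.
Qed.

Theorem lemma4p7 (n : nat) (s : 'S_n) :
  avoids132 s ->
  (forall x : 'I_n, #|porbit s x| = 1 \/ #|porbit s x| = 3) ->
  forall g : 'I_n, s g = g ->
    (forall O, O \in three_cycles s -> (cyc_a O < g)%N) /\
    #|[set O in three_cycles s | (cyc_b O < g)%N]| =
    #|[set O in three_cycles s | (cyc_c O < g)%N]|.
Proof.
move=> Hav _ g Hg; split.
  by move=> O HO; case: (key Hav HO Hg).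
apply: eq_card => O; rewrite !in_set.
apply: andb_id2l => HO.
have HO2 : O \in three_cycles s by rewrite inE.
by case: (key Hav HO2 Hg).
Qed.
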